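(* Let $G(\pi_i,\pi_i')=\frac12\|\pi_i-\pi_i'\|^2$ and $\mu>0$. Let $K\ge1$, $c>1$, and $T_\sigma\ge\max\big(\frac{3}{\ln c}\ln K+\frac{\ln64}{\ln c},1\big)$. Let $\sigma^0,\dots,\sigma^K\in\mathcal X$ satisfy $$\|\pi^{\mu,\sigma^k}-\sigma^{k+1}\|\le\|\pi^{\mu,\sigma^k}-\sigma^k\|c^{-T_\sigma}\quad\text{for }k=0,\dots,K-1.$$ Assume $\sqrt{\sum_i\|\nabla_{\pi_i}v_i(\pi)\|^2}\le\zeta$ for all $\pi\in\mathcal X$. Then for any $\pi^*\in\Pi^*$, $$\|\pi^{\mu,\sigma^{K-1}}-\sigma^{K-1}\|\le\frac{2\sqrt2}{\sqrt K}\sqrt{\|\pi^*-\sigma^0\|\Big(8\|\pi^*-\sigma^0\|+\frac\zeta\mu\Big)}.$$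
   Context: Game. Let $N\ge1$. For each $i\in[N]$, $\mathcal X_i\subseteq\mathbb R^{d_i}$ is a nonempty compact convex set, and $\mathcal X=\prod_i\mathcal X_i$. Each $v_i:\mathcal X\to\mathbb R$ is differentiable, with block gradient $\nabla_{\pi_i}v_i$. The norm is Euclidean, with $\|\pi\|^2=\sum_i\|\pi_i\|^2$. The game is monotone: $\sum_i\langle\nabla_{\pi_i}v_i(\pi)-\nabla_{\pi_i}v_i(\pi'),\pi_i-\pi_i'\rangle\le0$ for all $\pi,\pi'$. A Nash equilibrium is a $\pi^*$ with $v_i(\pi^* )\ge v_i(\pi_i,\pi^*_{-i})$ for all $i$ and $\pi_i\in\mathcal X_i$. $\Pi^*$ is the set of Nash equilibria. Perturbed equilibrium. For $\mu>0$ and $\sigma\in\mathcal X$, $\pi^{\mu,\sigma}$ is the (unique) profile with $\pi_i^{\mu,\sigma}\in\arg\max_{\pi_i\in\mathcal X_i}\{v_i(\pi_i,\pi^{\mu,\sigma}_{-i})-\mu G(\pi_i,\sigma_i)\}$ for all $i$. *)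

(* Defs.v *)
From HB Require Import structures.
From mathcomp Require Import all_boot all_order all_algebra.
From mathcomp Require Import all_classical all_reals all_analysis.
Set Implicit Arguments. Unset Strict Implicit. Unset Printing Implicit Defensive.
Import Order.TTheory GRing.Theory Num.Theory.
Import numFieldNormedType.Exports.
Local Open Scope classical_set_scope.
Local Open Scope ring_scope.

Definition profile (R : realType) (N : nat) (d : 'I_N -> nat) : Type :=
  forall i : 'I_N, 'rV[R]_(d i).

Definition dotv (R : realType) n (u v : 'rV[R]_n) : R := \sum_(j < n) u 0 j * v 0 j.
Definition enorm (R : realType) n (u : 'rV[R]_n) : R := Num.sqrt (dotv u u).

Definition pdot (R : realType) (N : nat) (d : 'I_N -> nat) (x y : profile R d) : R :=
  \sum_(i < N) dotv (x i) (y i).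
Definition pnorm (R : realType) (N : nat) (d : 'I_N -> nat) (x : profile R d) : R := Num.sqrt (pdot x x).
Definition padd (R : realType) (N : nat) (d : 'I_N -> nat) (x y : profile R d) : profile R d :=
  fun i => x i + y i.
Definition psub (R : realType) (N : nat) (d : 'I_N -> nat) (x y : profile R d) : profile R d :=
  fun i => x i - y i.

(* (y, x_{-i}) : replace the i-th block of x by y. *)
Definition upd (R : realType) (N : nat) (d : 'I_N -> nat) (x : profile R d) (i : 'I_N) (y : 'rV[R]_(d i))
  : profile R d :=
  fun j => match (@eqP _ i j) with
           | ReflectT e => eq_rect i (fun k => 'rV[R]_(d k)) y j e
           | ReflectF _ => x j
           end.
Arguments upd {R N d} x i y.

Definition in_prod (R : realType) (N : nat) (d : 'I_N -> nat) (X : forall i : 'I_N, set 'rV[R]_(d i))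
  (x : profile R d) : Prop := forall i, X i (x i).

Definition has_gradient (R : realType) (N : nat) (d : 'I_N -> nat) (f : profile R d -> R)
  (x g : profile R d) : Prop :=
  forall eps : R, 0 < eps -> exists2 delta : R, 0 < delta &
    forall h : profile R d, pnorm h < delta ->
      `| f (padd x h) - f x - pdot g h | <= eps * pnorm h.

Definition monotone_game (R : realType) (N : nat) (d : 'I_N -> nat) (X : forall i : 'I_N, set 'rV[R]_(d i))
  (gv : 'I_N -> profile R d -> profile R d) : Prop :=
  forall x y : profile R d, in_prod X x -> in_prod X y ->
    \sum_(i < N) dotv (gv i x i - gv i y i) (x i - y i) <= 0.

Definition nash_eq (R : realType) (N : nat) (d : 'I_N -> nat) (X : forall i : 'I_N, set 'rV[R]_(d i))
  (v : 'I_N -> profile R d -> R) (p : profile R d) : Prop :=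
  in_prod X p /\
  forall i (y : 'rV[R]_(d i)), X i y -> v i (upd p i y) <= v i p.

Definition Greg (R : realType) n (x y : 'rV[R]_n) : R := (enorm (x - y)) ^+ 2 / 2.

Definition perturbed_eq (R : realType) (N : nat) (d : 'I_N -> nat) (X : forall i : 'I_N, set 'rV[R]_(d i))
  (v : 'I_N -> profile R d -> R) (mu : R) (sigma p : profile R d) : Prop :=
  in_prod X p /\
  forall i (y : 'rV[R]_(d i)), X i y ->
    v i (upd p i y) - mu * Greg y (sigma i) <= v i p - mu * Greg (p i) (sigma i).

(* Main.v *)
Require Import Defs.
From HB Require Import structures.
From mathcomp Require Import all_boot all_order all_algebra.
From mathcomp Require Import all_classical all_reals all_analysis.
Import Order.TTheory GRing.Theory Num.Theory.
Import numFieldNormedType.Exports.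
Local Open Scope classical_set_scope.
Local Open Scope ring_scope.
From mathcomp Require Import lra ring.
Local Open Scope convex_scope.
Set Implicit Arguments. Unset Strict Implicit.
Lemma mk01 (R : realType) (t : R) : 0 <= t -> t <= 1 -> {x : {i01 R} | x%:num = t}.
Proof.
move=> t0 t1.
have P : Itv.spec (@Itv.num_sem R) (Itv.Real `[0%Z, 1%Z]) t.
  by rewrite /= /Itv.num_sem /= in_itv /= t0 t1 ger0_real.
by exists (Itv.Def P).
Qed.
Lemma convE (R : realType) n (x y : 'rV[R]_n) (l : {i01 R}) :
  (x : convex_lmodType _) <| l |> y = l%:num *: x + (1 - l%:num) *: y.
Proof. reflexivity. Qed.
Section Alg.
Variable R : realType.
Variable N : nat.
Variable d : 'I_N -> nat.
Implicit Types x y z w : profile R d.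

Lemma dotvDl n (u v w : 'rV[R]_n) : dotv (u + v) w = dotv u w + dotv v w.
Proof. by rewrite /dotv -big_split; apply: eq_bigr => j _; rewrite mxE mulrDl. Qed.
Lemma dotvNl n (u w : 'rV[R]_n) : dotv (- u) w = - dotv u w.
Proof. by rewrite /dotv -sumrN; apply: eq_bigr => j _; rewrite mxE mulNr. Qed.
Lemma dotvBl n (u v w : 'rV[R]_n) : dotv (u - v) w = dotv u w - dotv v w.
Proof. by rewrite dotvDl dotvNl. Qed.
Lemma dotvZl n a (u w : 'rV[R]_n) : dotv (a *: u) w = a * dotv u w.
Proof. by rewrite /dotv mulr_sumr; apply: eq_bigr => j _; rewrite mxE mulrA. Qed.
Lemma dotvC n (u w : 'rV[R]_n) : dotv u w = dotv w u.
Proof. by apply: eq_bigr => j _; rewrite mulrC. Qed.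
Lemma dotvDr n (u v w : 'rV[R]_n) : dotv w (u + v) = dotv w u + dotv w v.
Proof. by rewrite dotvC dotvDl !(dotvC w). Qed.
Lemma dotvBr n (u v w : 'rV[R]_n) : dotv w (u - v) = dotv w u - dotv w v.
Proof. by rewrite dotvC dotvBl !(dotvC w). Qed.
Lemma dotvZr n a (u w : 'rV[R]_n) : dotv w (a *: u) = a * dotv w u.
Proof. by rewrite dotvC dotvZl dotvC. Qed.
Lemma dotv0r n (u : 'rV[R]_n) : dotv u 0 = 0.
Proof. by rewrite /dotv big1 // => j _; rewrite mxE mulr0. Qed.
Lemma dotv_ge0 n (u : 'rV[R]_n) : 0 <= dotv u u.
Proof. by apply: sumr_ge0 => j _; rewrite -expr2 sqr_ge0. Qed.

Lemma pdotBl x y z : pdot (psub x y) z = pdot x z - pdot y z.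
Proof. by rewrite /pdot -sumrB; apply: eq_bigr => i _; rewrite /psub dotvBl. Qed.
Lemma pdotC x y : pdot x y = pdot y x.
Proof. by apply: eq_bigr => i _; rewrite dotvC. Qed.
Lemma pdotBr x y z : pdot z (psub x y) = pdot z x - pdot z y.
Proof. by rewrite pdotC pdotBl !(pdotC z). Qed.
Lemma pdot_ge0 x : 0 <= pdot x x.
Proof. by apply: sumr_ge0 => i _; exact: dotv_ge0. Qed.
Lemma pnorm_ge0 x : 0 <= pnorm x.
Proof. exact: sqrtr_ge0. Qed.
Lemma pnorm_sqr x : pnorm x ^+ 2 = pdot x x.
Proof. by rewrite /pnorm sqr_sqrtr // pdot_ge0. Qed.

Definition pscale (a : R) x : profile R d := fun i => a *: x i.
Lemma pdotZl a x y : pdot (pscale a x) y = a * pdot x y.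
Proof. by rewrite /pdot mulr_sumr; apply: eq_bigr => i _; rewrite dotvZl. Qed.
Lemma pdotZr a x y : pdot y (pscale a x) = a * pdot y x.
Proof. by rewrite pdotC pdotZl pdotC. Qed.

Lemma pdot0 x : pdot x x = 0 -> forall y, pdot x y = 0.
Proof.
move=> h y; rewrite /pdot big1 // => i _.
have hi : dotv (x i) (x i) = 0.
  move/eqP: h; rewrite psumr_eq0; last by move=> i0 _; exact: dotv_ge0.
  by move/allP => /(_ i (mem_index_enum _)) /= /eqP.
rewrite /dotv big1 // => j _.
move/eqP: hi; rewrite psumr_eq0; last by move=> j0 _; rewrite -expr2 sqr_ge0.
move/allP => /(_ j (mem_index_enum _)) /=.
by rewrite mulf_eq0 orbb => /eqP ->; rewrite mul0r.
Qed.

Lemma CS x y : pdot x y <= pnorm x * pnorm y.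
Proof.
have [hx|hx] := eqVneq (pdot x x) 0.
  by rewrite pdot0 // mulr_ge0 // pnorm_ge0.
have [hy|hy] := eqVneq (pdot y y) 0.
  by rewrite pdotC pdot0 // mulr_ge0 // pnorm_ge0.
set a := pnorm x; set b := pnorm y.
have a2 : a ^+ 2 = pdot x x by exact: pnorm_sqr.
have b2 : b ^+ 2 = pdot y y by exact: pnorm_sqr.
have a0 : 0 < a by rewrite lt_neqAle pnorm_ge0 andbT; apply/eqP => e; move: hx; rewrite -a2 -e expr0n eqxx.
have b0 : 0 < b by rewrite lt_neqAle pnorm_ge0 andbT; apply/eqP => e; move: hy; rewrite -b2 -e expr0n eqxx.
have := pdot_ge0 (psub (pscale b x) (pscale a y)).
rewrite !pdotBl !pdotBr !pdotZl !pdotZr (pdotC y x) => h.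
have : 2 * a * b * pdot x y <= 2 * a * b * (a * b).
  rewrite -a2 -b2 in h; nra.
rewrite ler_pM2l //; nra.
Qed.

Lemma pnormBC x y : pnorm (psub x y) = pnorm (psub y x).
Proof. by rewrite /pnorm !pdotBl !pdotBr (pdotC x y); congr Num.sqrt; lra. Qed.

Lemma sq_le (u v : R) : 0 <= u -> 0 <= v -> u ^+ 2 <= v ^+ 2 -> u <= v.
Proof. by move=> u0 v0; rewrite ler_sqr // nnegrE. Qed.

Lemma ptri x y z : pnorm (psub x z) <= pnorm (psub x y) + pnorm (psub y z).
Proof.
apply: sq_le; rewrite ?addr_ge0 ?pnorm_ge0 //.
have := CS (psub x y) (psub y z).
rewrite !pnorm_sqr sqrrD !pnorm_sqr.
rewrite !pdotBl !pdotBr (pdotC y x) (pdotC z x) (pdotC z y); lra.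
Qed.
End Alg.
Section Foc.
Variable R : realType.
Variable N : nat.
Variable d : 'I_N -> nat.

Lemma upd_same (x : profile R d) i (y : 'rV[R]_(d i)) : upd x i y i = y.
Proof.
rewrite /upd; case: (@eqP _ i i) => [e|]; last by [].
by rewrite (eq_irrelevance e erefl).
Qed.

Lemma upd_other (x : profile R d) i (y : 'rV[R]_(d i)) j : i != j -> upd x i y j = x j.
Proof. by rewrite /upd => ne; case: (@eqP _ i j) => // e; rewrite e eqxx in ne. Qed.

Definition pzero : profile R d := fun j => 0.

Lemma padd_upd (p : profile R d) i (z : 'rV[R]_(d i)) :
  padd p (upd pzero i z) = upd p i (p i + z).
Proof.
apply: functional_extensionality_dep => j.
case: (eqVneq i j) => [<-|ne]; first by rewrite /padd !upd_same.
by rewrite /padd !upd_other // /pzero addr0.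
Qed.

Lemma pdot_upd (g : profile R d) i (z : 'rV[R]_(d i)) :
  pdot g (upd pzero i z) = dotv (g i) z.
Proof.
rewrite /pdot (bigD1 i) //= upd_same big1 ?addr0 // => j ne.
by rewrite upd_other ?dotv0r // eq_sym.
Qed.

Lemma pdot_upd2 i (z : 'rV[R]_(d i)) :
  pdot (upd pzero i z) (upd pzero i z) = dotv z z.
Proof.
rewrite /pdot (bigD1 i) //= upd_same big1 ?addr0 // => j ne.
by rewrite upd_other ?dotv0r // eq_sym.
Qed.

Lemma Greg_dot n (y s : 'rV[R]_n) : Greg y s = dotv (y - s) (y - s) / 2.
Proof. by rewrite /Greg /enorm sqr_sqrtr // dotv_ge0. Qed.

Lemma dotv_exp n (b s w : 'rV[R]_n) t :
  dotv (b + t *: w - s) (b + t *: w - s) =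
  dotv (b - s) (b - s) + 2 * t * dotv (b - s) w + t ^+ 2 * dotv w w.
Proof.
have -> : b + t *: w - s = (b - s) + t *: w by rewrite addrAC.
move: (b - s) => a.
rewrite dotvDl !dotvDr !dotvZl !dotvZr (dotvC w a); ring.
Qed.

Lemma foc (f : profile R d -> R) (p g : profile R d) i (Y : set 'rV[R]_(d i)) m
  (s : 'rV[R]_(d i)) :
  convex_set Y -> Y (p i) -> has_gradient f p g -> 0 <= m ->
  (forall y, Y y -> f (upd p i y) - m * Greg y s <= f p - m * Greg (p i) s) ->
  forall y, Y y -> dotv (g i - m *: (p i - s)) (y - p i) <= 0.
Proof.
move=> cY Ypi hg m0 hopt y Yy.
set w := y - p i.
rewrite dotvBl dotvZl.
set L := dotv (g i) w - m * dotv (p i - s) w.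
rewrite leNgt; apply/negP => L0.
set W := dotv w w.
have W0 : 0 <= W by exact: dotv_ge0.
set nw := Num.sqrt W.
have nw0 : 0 <= nw by exact: sqrtr_ge0.
have nw2 : nw ^+ 2 = W by rewrite sqr_sqrtr.
set eps := L / 2.
have eps0 : 0 < eps by rewrite divr_gt0.
have nw1 : 0 < 2 * (nw + 1) by rewrite mulr_gt0 // ltr_wpDl.
set eps1 := eps / (2 * (nw + 1)).
have eps10 : 0 < eps1 by rewrite divr_gt0.
have eps1E : eps1 * (2 * (nw + 1)) = eps by rewrite /eps1 divfK // gt_eqF.
have [del del0 hdel] := hg eps1 eps10.
have mW1 : 0 < m * W + 1 by rewrite ltr_wpDl // mulr_ge0.
set t := Num.min 1 (Num.min (del / (2 * (nw + 1))) (eps / (m * W + 1))).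
have t0 : 0 < t by rewrite !lt_min ltr01 !divr_gt0.
have t1 : t <= 1 by rewrite ge_min lexx.
have tdel : t * (2 * (nw + 1)) <= del.
  by rewrite -ler_pdivlMr // ge_min; apply/orP; right; rewrite ge_min lexx.
have teps : t * (m * W + 1) <= eps.
  by rewrite -ler_pdivlMr // ge_min; apply/orP; right; rewrite ge_min lexx orbT.
have [l hl] := mk01 (ltW t0) t1.
have Yt : Y (p i + t *: w).
  have := cY y (p i) l (mem_set Yy) (mem_set Ypi).
  rewrite convE hl => /set_mem.
  by congr Y; rewrite /w scalerBr scalerBl scale1r addrCA.
have := hopt _ Yt.
set h := upd pzero i (t *: w).
have ph : padd p h = upd p i (p i + t *: w) by exact: padd_upd.
have nh : pnorm h = t * nw.
  rewrite /pnorm /h pdot_upd2 dotvZl dotvZr mulrA -expr2 sqrtrM ?sqr_ge0 //.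
  by rewrite sqrtr_sqr ger0_norm // ltW.
have := hdel h; rewrite nh ph => /(_ _).
have tnw : t * nw < del.
  have : 0 <= t * nw by rewrite mulr_ge0 // ltW.
  nra.
move=> /(_ tnw); rewrite ler_norml => /andP[F2 _].
rewrite !Greg_dot.
rewrite dotv_exp.
rewrite /h pdot_upd dotvZr in F2.
move=> F1.
have H1 : t * (L - eps1 * nw - m * t * W / 2) <= 0.
  rewrite /L /W; lra.
rewrite pmulr_rle0 // in H1.
have H2 : eps1 * nw <= eps / 2.
  have : eps1 * nw * 2 <= eps.
    rewrite -eps1E; nra.
  lra.
have H3 : m * t * W <= eps.
  have : 0 <= m * t * W by rewrite !mulr_ge0 // ltW.
  nra.
have : L <= eps by lra.
rewrite /eps; lra.
Qed.
End Foc.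
Unset Implicit Arguments.
Section Opt.
Variable R : realType.
Variable N : nat.
Variable d : 'I_N -> nat.
Variable X : forall i : 'I_N, set 'rV[R]_(d i).
Variable v : 'I_N -> profile R d -> R.
Variable gv : 'I_N -> profile R d -> profile R d.
Hypothesis cX : forall i : 'I_N, convex_set (X i).
Hypothesis hgr : forall i x, in_prod X x -> has_gradient (v i) x (gv i x).
Hypothesis mono : monotone_game X gv.

Definition Fp (p : profile R d) : profile R d := fun i => gv i p i.

Definition optc (p : profile R d) (m : R) (s : profile R d) :=
  forall y, in_prod X y -> pdot (psub (Fp p) (pscale m (psub p s))) (psub y p) <= 0.

Lemma opt_pert mu s p : 0 <= mu -> perturbed_eq X v mu s p -> optc p mu s.
Proof.
move=> mu0 [Xp hp] y Xy; rewrite /pdot; apply: sumr_le0 => i _.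
exact: (@foc R N d (v i) p (gv i p) i (X i) mu (s i) (cX i) (Xp i) (hgr i p Xp) mu0 (hp i) _ (Xy i)).
Qed.

Lemma opt_nash p : nash_eq X v p -> optc p 0 p.
Proof.
move=> [Xp hp] y Xy; rewrite /pdot; apply: sumr_le0 => i _.
have := (@foc R N d (v i) p (gv i p) i (X i) 0 (p i) (cX i) (Xp i) (hgr i p Xp) (lexx 0) _ _ (Xy i)).
rewrite /psub /pscale; apply.
by move=> z Xz; rewrite !mul0r !subr0; exact: hp.
Qed.

Lemma key p q m m' s s' : in_prod X p -> in_prod X q -> optc p m s -> optc q m' s' ->
  m * pdot (psub p s) (psub p q) + m' * pdot (psub q s') (psub q p) <= 0.
Proof.
move=> Xp Xq hp hq.
have h1 := hp q Xq; have h2 := hq p Xp.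
have hm : pdot (psub (Fp p) (Fp q)) (psub p q) <= 0 := mono p q Xp Xq.
rewrite ?pdotBl ?pdotBr ?pdotZl ?pdotBl ?pdotBr in h1 h2 hm *.
rewrite ?(pdotC q p) in h1 h2 hm *.
lra.
Qed.
End Opt.
Section Seq.
Variable R : realType.

Lemma seqb (a b q e : nat -> R) (dl : R) (K : nat) :
 (1 <= K)%N -> 0 <= dl -> K%:R * dl <= 1/64 ->
 (forall k, 0 <= a k) -> (forall k, 0 <= b k) -> (forall k, 0 <= q k) ->
 (forall k, (k < K)%N -> q k ^+ 2 + a k ^+ 2 <= b k ^+ 2) ->
 (forall k, (k < K)%N -> e k <= a k * dl) ->
 (forall k, (k < K)%N -> b k.+1 <= q k + e k) ->
 (forall k, (k.+1 < K)%N -> a k.+1 <= a k + 2 * e k) ->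
 K%:R * a K.-1 ^+ 2 <= 8 * b 0%N ^+ 2.
Proof.
move=> K1 dl0 Kdl a0 b0 q0 F1 F2 F3 F4.
have hab k : (k < K)%N -> a k <= b k /\ q k <= b k.
  move=> kK; have := F1 k kK; have := a0 k; have := q0 k; have := b0 k.
  by move=> ? ? ? ?; split; apply: sq_le => //; nra.
have kdl k : (k <= K)%N -> k%:R * dl <= 1/64.
  move=> kK; apply: le_trans Kdl; apply: ler_wpM2r => //; by rewrite ler_nat.
have hb1 k : (k < K)%N -> b k.+1 <= (1 + dl) * b k.
  move=> kK; have [ha hq] := hab k kK; have := F2 k kK; have := F3 k kK.
  have := a0 k; nra.
have hbk k : (k <= K)%N -> b k <= (1 + 2 * k%:R * dl) * b 0%N.
  elim: k => [|k IH] kK; first by rewrite mulr0 mul0r addr0 mul1r.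
  have kK' : (k < K)%N by [].
  have IH' := IH (ltnW kK').
  have hk := kdl k (ltnW kK').
  have hk1 := kdl k.+1 kK.
  have e1 : (k.+1)%:R = k%:R + 1 :> R by rewrite -addn1 natrD.
  rewrite e1.
  have P : (1 + dl) * (1 + 2 * k%:R * dl) <= 1 + 2 * (k%:R + 1) * dl.
    have : 0 <= k%:R :> R by [].
    nra.
  apply: le_trans (hb1 k kK') _.
  apply: le_trans (ler_wpM2l _ IH') _; first by rewrite addr_ge0.
  rewrite mulrA; apply: ler_wpM2r => //.
have hb2 k : (k <= K)%N -> b k <= 2 * b 0%N.
  move=> kK; apply: le_trans (hbk k kK) _; apply: ler_wpM2r => //.
  have := kdl k kK; lra.
have hstep k : (k < K)%N -> a k ^+ 2 <= b k ^+ 2 - b k.+1 ^+ 2 + 12 * dl * b 0%N ^+ 2.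
  move=> kK; have [ha hq] := hab k kK.
  have f1 := F1 k kK; have f2 := F2 k kK; have f3 := F3 k kK.
  have hb := hb2 k (ltnW kK).
  have dl1 : dl <= 1 by have := kdl 1%N K1; lra.
  have A0 := a0 k; have B0 := b0 k; have Q0 := q0 k; have B1 := b0 k.+1.
  have Bz := b0 0%N.
  have s1 : b k.+1 <= q k + a k * dl by lra.
  have s2 : b k.+1 ^+ 2 <= (q k + a k * dl) ^+ 2.
    by rewrite ler_sqr // nnegrE // addr_ge0 // mulr_ge0.
  have s3 : q k * a k <= b k ^+ 2 by nra.
  have s4 : a k ^+ 2 * dl ^+ 2 <= b k ^+ 2 * dl.
    have : a k ^+ 2 <= b k ^+ 2 by nra.
    have : dl ^+ 2 <= dl by nra.
    nra.
  have s5 : b k ^+ 2 <= 4 * b 0%N ^+ 2 by nra.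
  nra.
have hsum : \sum_(0 <= k < K) a k ^+ 2 <= 2 * b 0%N ^+ 2.
  apply: le_trans (ler_sum_nat (G := fun k => - (b k.+1 ^+ 2 - b k ^+ 2) + 12 * dl * b 0%N ^+ 2) _) _.
    move=> k /andP[_ kK] /=; have := hstep k kK; lra.
  rewrite big_split /= sumrN telescope_sumr // sumr_const_nat subn0.
  rewrite -mulr_natr.
  have : 0 <= b K ^+ 2 by rewrite sqr_ge0.
  have : 0 <= b 0%N ^+ 2 by rewrite sqr_ge0.
  nra.
have hmono j : forall k, (k + j < K)%N -> a (k + j)%N <= (1 + 4 * j%:R * dl) * a k.
  elim: j => [|j IH] k kjK; first by rewrite addn0 mulr0 mul0r addr0 mul1r.
  rewrite addnS in kjK *.
  have IH' := IH k (ltnW kjK).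
  have hj : j.+1%:R * dl <= 1/64 :> R.
    by apply: kdl; apply: leq_trans (ltnW kjK); rewrite ltnS leq_addl.
  have e1 : (j.+1)%:R = j%:R + 1 :> R by rewrite -addn1 natrD.
  rewrite e1 in hj *.
  have f4 := F4 _ kjK.
  have f2 := F2 (k + j)%N (ltnW kjK).
  have A1 := a0 (k + j)%N; have A2 := a0 k.
  have s1 : a (k + j).+1 <= (1 + 2 * dl) * a (k + j)%N by nra.
  have P : (1 + 2 * dl) * (1 + 4 * j%:R * dl) <= 1 + 4 * (j%:R + 1) * dl.
    have : 0 <= j%:R :> R by [].
    nra.
  apply: le_trans s1 _.
  apply: le_trans (ler_wpM2l _ IH') _; first by rewrite addr_ge0 // mulr_ge0.
  rewrite mulrA; exact: ler_wpM2r.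
have hlast k : (k < K)%N -> a K.-1 ^+ 2 <= 4 * a k ^+ 2.
  move=> kK.
  have eK : (k + (K.-1 - k))%N = K.-1 by rewrite subnKC // -ltnS prednK // (leq_trans _ K1).
  have KK : (K.-1 < K)%N by rewrite ltn_predL (leq_trans _ K1).
  have := hmono (K.-1 - k)%N k; rewrite eK => /(_ KK) h.
  have hj : (K.-1 - k)%:R * dl <= 1/64 :> R.
    by apply: kdl; rewrite (leq_trans (leq_subr _ _)) // ltnW.
  have A1 := a0 K.-1; have A2 := a0 k.
  have h2 : a K.-1 <= 2 * a k.
    apply: le_trans h _; apply: ler_wpM2r => //; lra.
  have : a K.-1 ^+ 2 <= (2 * a k) ^+ 2 by rewrite ler_sqr // nnegrE mulr_ge0.
  lra.
have -> : K%:R * a K.-1 ^+ 2 = \sum_(0 <= k < K) a K.-1 ^+ 2.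
  by rewrite sumr_const_nat subn0 mulr_natl.
apply: le_trans (ler_sum_nat (G := fun k => 4 * a k ^+ 2) _) _.
  by move=> k /andP[_ kK]; exact: hlast.
rewrite -mulr_sumr; lra.
Qed.
End Seq.
Unset Implicit Arguments.
Theorem lemma7 (R : realType) (N : nat) (d : 'I_N -> nat)
  (X : forall i : 'I_N, set 'rV[R]_(d i))
  (v : 'I_N -> profile R d -> R)
  (gv : 'I_N -> profile R d -> profile R d)
  (mu : R) (K : nat) (c T zeta : R)
  (sigma : nat -> profile R d) (pmu : nat -> profile R d) (pstar : profile R d) :
  (0 < N)%N ->
  (forall i, X i !=set0) ->
  (forall i, compact (X i)) ->
  (forall i, convex_set (X i)) ->
  (forall i x, in_prod X x -> has_gradient (v i) x (gv i x)) ->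
  monotone_game X gv ->
  0 < mu ->
  (1 <= K)%N ->
  1 < c ->
  Num.max (3 / ln c * ln K%:R + ln 64 / ln c) 1 <= T ->
  (forall k, (k <= K)%N -> in_prod X (sigma k)) ->
  (forall k, (k < K)%N -> perturbed_eq X v mu (sigma k) (pmu k)) ->
  (forall k, (k < K)%N ->
     pnorm (psub (pmu k) (sigma k.+1)) <= pnorm (psub (pmu k) (sigma k)) * c `^ (- T)) ->
  (forall x, in_prod X x -> Num.sqrt (\sum_(i < N) enorm (gv i x i) ^+ 2) <= zeta) ->
  nash_eq X v pstar ->
  pnorm (psub (pmu K.-1) (sigma K.-1)) <=
    2 * Num.sqrt 2 / Num.sqrt K%:R *
    Num.sqrt (pnorm (psub pstar (sigma 0%N)) *
              (8 * pnorm (psub pstar (sigma 0%N)) + zeta / mu)).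
Proof.
move=> N0 Xne Xcomp cX hgr mono mu0 K1 c1 hT hsig hpert hclose hzeta hnash.
set dl := c `^ (- T).
have dl0 : 0 <= dl by exact: powR_ge0.
have c0 : 0 < c := lt_trans ltr01 c1.
have lc0 : 0 < ln c by exact: ln_gt0.
have Kp : 0 < K%:R :> R by rewrite ltr0n.
have Kdl : K%:R * dl <= 1 / 64.
  have hT0 : 3 / ln c * ln K%:R + ln 64 / ln c <= T.
    by apply: le_trans hT; rewrite le_max lexx.
  have lK : 0 <= ln (K%:R : R) by apply: ln_ge0; rewrite ler1n.
  have e1 : (3 / ln c * ln K%:R + ln 64 / ln c) * ln c = 3 * ln K%:R + ln (64 : R).
    by field; rewrite gt_eqF.
  have cT : K%:R * 64 <= c `^ T.
    apply: le_trans (ler_powR (ltW c1) hT0).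
    rewrite /powR (gt_eqF c0) e1.
    have -> : K%:R * 64 = expR (ln (K%:R * 64 : R)) by rewrite lnK // posrE mulr_gt0.
    rewrite ler_expR lnM ?posrE //; lra.
  have cTp : 0 < c `^ T by exact: powR_gt0.
  rewrite /dl powRN.
  have -> : 1 / 64 = K%:R * (K%:R * 64)^-1 :> R by field; rewrite gt_eqF.
  apply: ler_wpM2l; first exact: ltW.
  by rewrite lef_pV2 ?posrE // mulr_gt0.
set a := fun k => pnorm (psub (pmu k) (sigma k)).
set b := fun k => pnorm (psub pstar (sigma k)).
set q := fun k => pnorm (psub pstar (pmu k)).
set e := fun k => pnorm (psub (pmu k) (sigma k.+1)).
have Xs : in_prod X pstar by case: hnash.
have optk k : (k < K)%N -> optc R N d X gv (pmu k) mu (sigma k).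
  by move=> kK; exact: (@opt_pert R N d X v gv cX hgr mu _ _ (ltW mu0) (hpert k kK)).
have optn := @opt_nash R N d X v gv cX hgr pstar hnash.
have XJ k : (k < K)%N -> in_prod X (pmu k) by move=> kK; case: (hpert k kK).
have F1 k : (k < K)%N -> q k ^+ 2 + a k ^+ 2 <= b k ^+ 2.
  move=> kK.
  have hk := @key R N d X gv mono _ _ _ _ _ _ (XJ k kK) Xs (optk k kK) optn.
  rewrite mul0r addr0 pmulr_rle0 // in hk.
  rewrite /q /a /b !pnorm_sqr !pdotBl !pdotBr in hk *.
  rewrite ?(pdotC (pmu k) pstar) ?(pdotC (sigma k) pstar) ?(pdotC (sigma k) (pmu k)) in hk *.
  lra.
have F2 k : (k < K)%N -> e k <= a k * dl by move=> kK; exact: hclose.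
have F3 k : (k < K)%N -> b k.+1 <= q k + e k by move=> kK; exact: ptri.
have F4 k : (k.+1 < K)%N -> a k.+1 <= a k + 2 * e k.
  move=> kK.
  have kK' : (k < K)%N by exact: ltnW.
  have hk := @key R N d X gv mono _ _ _ _ _ _ (XJ k kK') (XJ k.+1 kK) (optk k kK') (optk k.+1 kK).
  rewrite -mulrDr pmulr_rle0 // in hk.
  set nu := pnorm (psub (pmu k.+1) (pmu k)).
  have c1' := CS (psub (pmu k.+1) (pmu k)) (psub (sigma k.+1) (pmu k)).
  rewrite [pnorm (psub (sigma k.+1) _)]pnormBC -/nu in c1'.
  have c2' := CS (psub (pmu k.+1) (pmu k)) (psub (pmu k) (sigma k)).
  rewrite -/nu in c2'.
  have nu2 := pnorm_sqr (psub (pmu k.+1) (pmu k)).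
  rewrite -/nu in nu2.
  rewrite !pdotBl !pdotBr in hk c1' c2' nu2.
  rewrite ?(pdotC (pmu k.+1) (pmu k)) ?(pdotC (sigma k) (pmu k)) ?(pdotC (sigma k.+1) (pmu k))
    ?(pdotC (sigma k) (pmu k.+1)) ?(pdotC (sigma k.+1) (pmu k.+1)) ?(pdotC (sigma k.+1) (sigma k))
    in hk c1' c2' nu2.
  have hnu : nu ^+ 2 <= nu * e k + nu * a k by rewrite /e /a; lra.
  have nu0 : 0 <= nu by exact: pnorm_ge0.
  have e0 : 0 <= e k by exact: pnorm_ge0.
  have a0 : 0 <= a k by exact: pnorm_ge0.
  have hnu' : nu <= e k + a k by nra.
  have := ptri (pmu k.+1) (pmu k) (sigma k.+1).
  rewrite -/nu -/(e k) -/(a k.+1); lra.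
have hS := @seqb R a b q e dl K K1 dl0 Kdl (fun k => pnorm_ge0 _) (fun k => pnorm_ge0 _) (fun k => pnorm_ge0 _)
  F1 F2 F3 F4.
rewrite -/(a K.-1) -/(b 0%N).
have z0 : 0 <= zeta.
  by apply: le_trans (hzeta _ (hsig 0%N (leq0n _))); exact: sqrtr_ge0.
have zm : 0 <= zeta / mu by rewrite divr_ge0 // ltW.
have B0 : 0 <= b 0%N by exact: pnorm_ge0.
have A0 : 0 <= a K.-1 by exact: pnorm_ge0.
have sK : 0 < Num.sqrt (K%:R : R) by rewrite sqrtr_gt0.
apply: sq_le => //.
have s2 : Num.sqrt 2 ^+ 2 = 2 :> R by rewrite sqr_sqrtr.
have sK2 : Num.sqrt K%:R ^+ 2 = K%:R :> R by rewrite sqr_sqrtr // ler0n.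
have sB : Num.sqrt (b 0%N * (8 * b 0%N + zeta / mu)) ^+ 2 = b 0%N * (8 * b 0%N + zeta / mu).
  by rewrite sqr_sqrtr // mulr_ge0 // addr_ge0 // mulr_ge0.
rewrite !exprMn exprVn s2 sK2 sB mulrAC.
have e8 : 2 ^+ 2 * 2 = 8 :> R by rewrite expr2 -!natrM.
rewrite e8.
rewrite ler_pdivlMr //.
have : 0 <= b 0%N * (zeta / mu) by rewrite mulr_ge0.
nra.
Qed.
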